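(* Let $0\le r\le\infty$, let $f:V\to W$ be a smooth map between finite-dimensional real inner product spaces with $|f|_{[r]}<\infty$, let $\omega\in\mathcal B_k^r(W)$ and $J\in\mathcal N_k^r(V)$. Then $$\int_Jf^*\omega=\int_{f_*J}\omega.$$
   Context: For a simple $k$-vector $\alpha=w_1\wedge\dots\wedge w_k$, $M(\alpha)=\sqrt{\det\langle w_i,w_j\rangle}$. A monopolar $k$-chain in $V$ is a finite formal sum $\sum_i(p_i;\alpha_i)$, $p_i\in V$, $\alpha_i\in\Lambda_k(V)$, linear in the second slot at each point. $T_u(p;\alpha)=(p+u;\alpha)$, $\Delta_u=T_u-\mathrm{id}$, $\Delta^j_U=\Delta_{u_1}\circ\dots\circ\Delta_{u_j}$, $\|\Delta^j_U(p;\alpha)\|_j=|u_1|\cdots|u_j|M(\alpha)$. A $k$-form is a linear functional $\omega$ on monopolar $k$-chains; $\|\omega\|_0=\sup\{|\omega(p;\alpha)|:\alpha$ simple, $M(\alpha)=1\}$, $\|\omega\|_j=\sup\{|\omega(\Delta^j_U(p;\alpha))|:\|\Delta^j_U(p;\alpha)\|_j=1\}$, $|\omega|^{\natural_r}=\max_{0\le j\le r}\|\omega\|_j$, $\mathcal B_k^r$ = forms with finite norm. For a chain $P$, $|P|^{\natural_r}=\sup_{0\ne\omega\in\mathcal B_k^r}\omega(P)/|\omega|^{\natural_r}$; $\mathcal N_k^r$ is the completion of monopolar $k$-chains in this norm. For $J\in\mathcal N_k^r$, $\omega\in\mathcal B_k^r$: $\int_J\omega=\lim_i\omega(P_i)$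 for monopolar $P_i\to J$. Pushforward on chains: $f_*(x;v_1\wedge\dots\wedge v_k)=(f(x);Df_xv_1\wedge\dots\wedge Df_xv_k)$; $\|f\|_{[j]}=\sup|f_*\Delta^j_U(x;\alpha)|^{\natural_j}/\|\Delta^j_U(x;\alpha)\|_j$, $|f|_{[r]}=\max_{j\le r}\|f\|_{[j]}$; when $|f|_{[r]}<\infty$, $f_*$ extends continuously to chainlets, $f_*J=\lim f_*P_i$. Pullback: $f^*\omega(x;\alpha)=\omega(f_*(x;\alpha))$. *)

(* Defs.v *)
From HB Require Import structures.
From mathcomp Require Import all_boot all_order all_algebra.
From mathcomp Require Import all_classical all_reals all_analysis.
Set Implicit Arguments. Unset Strict Implicit. Unset Printing Implicit Defensive.
Import Order.TTheory GRing.Theory Num.Theory.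
Import numFieldNormedType.Exports.
Local Open Scope classical_set_scope.
Local Open Scope ring_scope.

Section Chainlets.
Variable R : realType.

Notation pt n := 'rV[R]_n.

Definition dotp n (u v : pt n) : R := \sum_(i < n) u ord0 i * v ord0 i.
Definition eucl n (u : pt n) : R := Num.sqrt (dotp u u).

(* A simple k-vector w_1 /\ ... /\ w_k is represented by the tuple
   (w_i)_{i<k}; its mass M = sqrt (det <w_i,w_j>). *)
Definition kvec n k := 'I_k -> pt n.
Definition mass n k (w : kvec n k) : R :=
  Num.sqrt (\det (\matrix_(i < k, j < k) dotp (w i) (w j))).

(* A monopolar k-chain: finite formal sum  sum_i c_i (p_i ; w_i) *)
Definition mchain n k := seq (R * pt n * kvec n k).

Definition chain_opp n k (P : mchain n k) : mchain n k :=
  map (fun t => (- t.1.1, t.1.2, t.2)) P.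
Definition chain_sub n k (P Q : mchain n k) : mchain n k := P ++ chain_opp Q.

Definition transl n k (u : pt n) (P : mchain n k) : mchain n k :=
  map (fun t => (t.1.1, t.1.2 + u, t.2)) P.
Fixpoint delta n k (U : seq (pt n)) (P : mchain n k) : mchain n k :=
  match U with
  | [::] => P
  | u :: U' => chain_sub (transl u (delta U' P)) (delta U' P)
  end.
Definition cell n k (p : pt n) (w : kvec n k) : mchain n k := [:: (1, p, w)].

(* k-forms: linear functionals on monopolar k-chains, i.e. functions
   p |-> (a linear functional on Lambda_k), given as alternating
   k-linear maps on the simple k-vectors. *)
Definition kform n k := pt n -> kvec n k -> R.

Definition upd n k (w : kvec n k) (i : 'I_k) (x : pt n) : kvec n k :=
  fun j => if j == i then x else w j.

Definition is_form n k (om : kform n k) : Prop :=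
  (forall p w i (a : R) (x y : pt n),
      om p (upd w i (a *: x + y)) = a * om p (upd w i x) + om p (upd w i y)) /\
  (forall p w (i j : 'I_k), i != j -> w i = w j -> om p w = 0).

Definition feval n k (om : kform n k) (P : mchain n k) : R :=
  \sum_(t <- P) t.1.1 * om t.1.2 t.2.

Definition dnorm n k (U : seq (pt n)) (w : kvec n k) : R :=
  (\prod_(u <- U) eucl u) * mass w.

Definition form_normj n k (j : nat) (om : kform n k) : \bar R :=
  ereal_sup [set (`| feval om (delta x.1.2 (cell x.1.1 x.2)) |)%:E
            | x in [set x : pt n * seq (pt n) * kvec n k |
                    size x.1.2 = j /\ dnorm x.1.2 x.2 = 1]].

(* smoothness index 0 <= r <= oo : [Some r] is a finite r, [None] is oo *)
Definition le_r (j : nat) (r : option nat) : bool :=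
  if r is Some r' then (j <= r')%N else true.

Definition form_norm n k (r : option nat) (om : kform n k) : \bar R :=
  ereal_sup [set form_normj j om | j in [set j | le_r j r]].

Definition inB n k (r : option nat) (om : kform n k) : Prop :=
  is_form om /\ (form_norm r om < +oo)%E.

Definition form_nonzero n k (om : kform n k) : Prop :=
  exists p w, om p w != 0.

(* |P|^{natural r} = sup_{0 <> omega in B_k^r} omega(P)/|omega|^{natural r}
   (the sup of the empty family is taken to be 0) *)
Definition chain_norm n k (r : option nat) (P : mchain n k) : \bar R :=
  ereal_sup ([set 0%E] `|`
    [set (feval om P / fine (form_norm r om))%:E
    | om in [set om : kform n k | inB r om /\ form_nonzero om]]).

(* Cauchy sequences of monopolar chains: representatives of elements of
   the completion N_k^r *)
Definition chain_cauchy n k (r : option nat) (P : nat -> mchain n k) : Prop :=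
  forall e : R, 0 < e -> exists N, forall i j, (N <= i)%N -> (N <= j)%N ->
    (chain_norm r (chain_sub (P i) (P j)) < e%:E)%E.

(* two Cauchy sequences represent the same chainlet *)
Definition chain_equiv n k (r : option nat) (P Q : nat -> mchain n k) : Prop :=
  forall e : R, 0 < e -> exists N, forall i, (N <= i)%N ->
    (chain_norm r (chain_sub (P i) (Q i)) < e%:E)%E.

Definition chainlet_int n k (om : kform n k) (P : nat -> mchain n k) : R :=
  limn (fun i => feval om (P i)).

Fixpoint iterD n m (vs : seq (pt n)) (f : pt n -> pt m) : pt n -> pt m :=
  match vs with
  | [::] => f
  | v :: vs' => fun x => 'D_v (iterD vs' f) x
  end.
Definition smooth n m (f : pt n -> pt m) : Prop :=
  forall (vs : seq (pt n)) (x : pt n), differentiable (iterD vs f) x.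

Definition push n m k (f : pt n -> pt m) (P : mchain n k) : mchain m k :=
  map (fun t : R * pt n * kvec n k => (t.1.1, f t.1.2, fun i : 'I_k => ('d f (t.1.2) : pt n -> pt m) (t.2 i))) P.

Definition pull n m k (f : pt n -> pt m) (om : kform m k) : kform n k :=
  fun x w => om (f x) (fun i => ('d f x : pt n -> pt m) (w i)).

Definition map_normj n m k (j : nat) (f : pt n -> pt m) : \bar R :=
  ereal_sup [set (chain_norm (Some j) (push f (delta x.1.2 (cell x.1.1 x.2)))
                  * ((dnorm x.1.2 x.2)^-1)%:E)%E
            | x in [set x : pt n * seq (pt n) * kvec n k |
                    size x.1.2 = j /\ dnorm x.1.2 x.2 != 0]].
Definition map_norm n m k (r : option nat) (f : pt n -> pt m) : \bar R :=
  ereal_sup [set map_normj k j f | j in [set j | le_r j r]].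

End Chainlets.

(* Main.v *)
Require Import Defs.
From HB Require Import structures.
From mathcomp Require Import all_boot all_order all_algebra.
From mathcomp Require Import all_classical all_reals all_analysis.
Import Order.TTheory GRing.Theory Num.Theory.
Import numFieldNormedType.Exports.
Local Open Scope classical_set_scope.
Local Open Scope ring_scope.
Set Implicit Arguments. Unset Strict Implicit.

Lemma upd_id (R : realType) n k (w : kvec R n k) i : upd w i (w i) = w.
Proof. by apply: funext => j; rewrite /upd; case: eqP => // ->. Qed.

Lemma upd_upd (R : realType) n k (w : kvec R n k) i x y : upd (upd w i x) i y = upd w i y.
Proof. by apply: funext => j; rewrite /upd; case: eqP. Qed.

Lemma form_upd0 (R : realType) n k (om : kform R n k) p w i :
  is_form om -> om p (upd w i 0) = 0.
Proof.
move=> [Hl _]; have := Hl p w i 1 0 0.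
rewrite scale1r addr0 mul1r => /eqP; rewrite -subr_eq0 => /eqP.
by rewrite opprD addrA subrr sub0r => /eqP; rewrite oppr_eq0 => /eqP.
Qed.

Lemma form_upd_sum (R : realType) n k (om : kform R n k) p w i (I : Type) (s : seq I)
  (c : I -> R) (x : I -> 'rV[R]_n) :
  is_form om ->
  om p (upd w i (\sum_(l <- s) c l *: x l)) = \sum_(l <- s) c l * om p (upd w i (x l)).
Proof.
move=> Hf; elim: s => [|a s IH]; first by rewrite !big_nil form_upd0.
by rewrite !big_cons Hf.1 IH.
Qed.

Lemma dotp_delta (R : realType) n (a b : 'I_n) :
  dotp (delta_mx 0 a : 'rV[R]_n) (delta_mx 0 b) = (a == b)%:R.
Proof.
rewrite /dotp (bigD1 a) //= big1 => [|j Hj]; rewrite !mxE ?eqxx /=.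
  by rewrite mul1r addr0 eq_sym.
by rewrite (negbTE Hj) mul0r.
Qed.

Lemma form_witness (R : realType) n k (om : kform R n k) p w :
  is_form om -> om p w != 0 -> exists w', mass w' = 1 /\ om p w' != 0.
Proof.
move=> Hf Hw.
have step : forall m, (m <= k)%N -> exists w' : kvec R n k, om p w' != 0 /\
    forall i : 'I_k, (i < m)%N -> exists l, w' i = delta_mx 0 l.
  elim=> [|m IH] Hm; first by exists w; split => // i.
  have [w' [Hw' Hi]] := IH (ltnW Hm).
  pose i0 := Ordinal Hm.
  have : om p w' = \sum_(l < n) w' i0 0 l * om p (upd w' i0 (delta_mx 0 l)).
    by rewrite -form_upd_sum // -row_sum_delta upd_id.
  move=> Heq.
  have [l Hl] : exists l, w' i0 0 l * om p (upd w' i0 (delta_mx 0 l)) != 0.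
    apply/existsP; apply: contraT; rewrite negb_exists => /forallP H0.
    move: Hw'; rewrite Heq big1 ?eqxx // => l _.
    by have := H0 l; rewrite negbK => /eqP.
  exists (upd w' i0 (delta_mx 0 l)); split.
    by apply: contraNneq Hl => ->; rewrite mulr0.
  move=> i Hi'; rewrite /upd; case: eqP => [_|Hne]; first by exists l.
  apply: Hi; rewrite ltnS leq_eqVlt in Hi'; case/orP: Hi' => // /eqP Him.
  by exfalso; apply: Hne; apply: val_inj.
have [w' [Hw' Hi]] := step k (leqnn k).
exists w'; split => //.
rewrite /mass.
have -> : (\matrix_(i < k, j < k) dotp (w' i) (w' j)) = 1%:M.
  apply/matrixP => a b; rewrite !mxE.
  have [la Ha] := Hi a (ltn_ord a); have [lb Hb] := Hi b (ltn_ord b).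
  case: (eqVneq a b) => [<-|Hab]; first by rewrite Ha dotp_delta !eqxx.
  rewrite Ha Hb dotp_delta.
  case: (eqVneq la lb) => [Hl|//].
  exfalso; move: Hw'; rewrite (Hf.2 p w' a b Hab) ?eqxx //.
  by rewrite Ha Hb Hl.
by rewrite det1 sqrtr1.
Qed.
Lemma cauchy_seq_cvg (R : realType) (u : nat -> R) :
  (forall e : R, 0 < e -> exists N, forall i j, (N <= i)%N -> (N <= j)%N -> `|u i - u j| < e) ->
  cvgn u.
Proof.
move=> H; apply/cauchy_cvgP/cauchy_ballP => e e0.
have [N HN] := H e e0.
rewrite near_simpl.
exists ([set i | (N <= i)%N], [set i | (N <= i)%N]).
  by split; exists N.
by move=> [i j] /= [Hi Hj]; rewrite -ball_normE /= HN.
Qed.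

Lemma feval_sub (R : realType) n k (om : kform R n k) P Q :
  feval om (chain_sub P Q) = feval om P - feval om Q.
Proof.
rewrite /feval /chain_sub big_cat /= /chain_opp big_map -sumrN.
by congr (_ + _); apply: eq_bigr => t _; rewrite mulNr.
Qed.

Definition negf (R : realType) n k (om : kform R n k) : kform R n k :=
  fun p w => - om p w.

Lemma feval_neg (R : realType) n k (om : kform R n k) P :
  feval (negf om) P = - feval om P.
Proof. by rewrite /feval -sumrN; apply: eq_bigr => t _; rewrite /negf mulrN. Qed.

Lemma form_normj_neg (R : realType) n k j (om : kform R n k) :
  form_normj j (negf om) = form_normj j om.
Proof.
rewrite /form_normj; congr ereal_sup; apply: eq_imagel => x _.
by rewrite feval_neg normrN.
Qed.

Lemma form_norm_neg (R : realType) n k r (om : kform R n k) :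
  form_norm r (negf om) = form_norm r om.
Proof.
rewrite /form_norm; congr ereal_sup; apply: eq_imagel => j _.
exact: form_normj_neg.
Qed.

Lemma negf_form (R : realType) n k (om : kform R n k) : is_form om -> is_form (negf om).
Proof.
move=> [Hl Ha]; split => [p w i a x y|p w i j Hij Hw]; rewrite /negf.
  by rewrite Hl opprD mulrN.
by rewrite (Ha p w i j Hij Hw) oppr0.
Qed.

Lemma negf_nonzero (R : realType) n k (om : kform R n k) :
  form_nonzero om -> form_nonzero (negf om).
Proof. by move=> [p [w H]]; exists p, w; rewrite /negf oppr_eq0. Qed.

Lemma feval_zero (R : realType) n k (om : kform R n k) P :
  ~ form_nonzero om -> feval om P = 0.
Proof.
move=> Hnz; rewrite /feval big1 // => t _.
suff -> : om t.1.2 t.2 = 0 by rewrite mulr0.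
apply/eqP; apply: contraT => H; case: Hnz; by exists t.1.2, t.2.
Qed.

Lemma chain_norm_ge0 (R : realType) n k r (P : mchain R n k) : (0 <= chain_norm r P)%E.
Proof. by apply: ereal_sup_ubound; left. Qed.

Lemma fine_gt0_fin (R : realType) (x : \bar R) : 0 < fine x -> x \is a fin_num.
Proof. by case: x => [r | |] //=; rewrite ltxx. Qed.

Lemma form_norm_pos (R : realType) n k r (om : kform R n k) :
  is_form om -> form_nonzero om -> (form_norm r om < +oo)%E -> 0 < fine (form_norm r om).
Proof.
move=> Hf [p [w Hw]] Hfin.
have [w' [Hm Hw']] := form_witness Hf Hw.
have H1 : ((`|om p w'|)%:E <= form_norm r om)%E.
  apply: (@le_trans _ _ (form_normj 0 om)).
    apply: ereal_sup_ubound; exists (p, [::], w') => /=.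
      by split => //; rewrite /dnorm big_nil mul1r.
    by rewrite /feval /= big_cons big_nil mul1r addr0.
  by apply: ereal_sup_ubound; exists 0%N => //; case: r Hfin.
apply: fine_gt0; rewrite Hfin andbT.
by apply: lt_le_trans H1; rewrite lte_fin normr_gt0.
Qed.

Lemma bound_aux (R : realType) n k r (om : kform R n k) P : inB r om -> form_nonzero om ->
  ((feval om P / fine (form_norm r om))%:E <= chain_norm r P)%E.
Proof. by move=> HB Hnz; apply: ereal_sup_ubound; right; exists om. Qed.

Lemma bound_abs (R : realType) n k r (om : kform R n k) P : inB r om -> form_nonzero om ->
  ((`|feval om P| / fine (form_norm r om))%:E <= chain_norm r P)%E.
Proof.
move=> [Hf Hfin] Hnz.
have [Hge|Hlt] := boolP (0 <= feval om P).
  by rewrite ger0_norm //; apply: bound_aux.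
rewrite ltr0_norm ?ltNge // -feval_neg -(form_norm_neg r om).
apply: bound_aux; last exact: negf_nonzero.
by split; [exact: negf_form | rewrite form_norm_neg].
Qed.

Lemma bound_lt (R : realType) n k r (om : kform R n k) P e : inB r om -> form_nonzero om ->
  (chain_norm r P < e%:E)%E -> `|feval om P| < e * fine (form_norm r om).
Proof.
move=> HB Hnz Hc.
have Hpos := form_norm_pos HB.1 Hnz HB.2.
by have := le_lt_trans (bound_abs P HB Hnz) Hc; rewrite lte_fin ltr_pdivrMr.
Qed.

Lemma form_norm_mono (R : realType) n k r j (om : kform R n k) :
  le_r j r -> (form_norm (Some j) om <= form_norm r om)%E.
Proof.
move=> Hj; apply: ereal_sup_le => _ [i Hi <-]; exists i => //.
by case: r Hj Hi => [r'|] //= Hj Hi; exact: leq_trans Hi Hj.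
Qed.

Lemma feval_pull (R : realType) n m k (f : 'rV[R]_n -> 'rV[R]_m) (om : kform R m k) P :
  feval (pull f om) P = feval om (push f P).
Proof. by rewrite /feval /push big_map. Qed.

Lemma pull_form (R : realType) n m k (f : 'rV[R]_n -> 'rV[R]_m) (om : kform R m k) :
  is_form om -> is_form (pull f om).
Proof.
move=> [Hl Ha]; split => [p w i a x y|p w i j Hij Hw]; rewrite /pull.
  have E : forall v, (fun i0 => ('d f p : _ -> _) (upd w i v i0)) =
      upd (fun i0 => ('d f p : _ -> _) (w i0)) i (('d f p : _ -> _) v).
    by move=> v; apply: funext => j; rewrite /upd; case: eqP.
  by rewrite !E linearP /=; exact: Hl.
by apply: (Ha _ _ i j Hij); rewrite Hw.
Qed.

Lemma push_sub (R : realType) n m k (f : 'rV[R]_n -> 'rV[R]_m) (P Q : mchain R n k) :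
  push f (chain_sub P Q) = chain_sub (push f P) (push f Q).
Proof. by rewrite /push /chain_sub /chain_opp map_cat -!map_comp. Qed.

Lemma pull_norm (R : realType) n m k r (f : 'rV[R]_n -> 'rV[R]_m) (om : kform R m k) :
  (map_norm k r f < +oo)%E -> inB r om -> form_nonzero om ->
  (form_norm r (pull f om) <= (fine (map_norm k r f) * fine (form_norm r om))%:E)%E.
Proof.
move=> HM [Hf Hfin] Hnz.
have HB : 0 < fine (form_norm r om) := form_norm_pos Hf Hnz Hfin.
apply: ge_ereal_sup => _ [j Hj <-].
apply: ge_ereal_sup => _ [[[p U] w] /= [HU Hd] <-].
rewrite feval_pull.
set D := push f (delta U (cell p w)).
have HBj : inB (Some j) om.
  by split => //; exact: le_lt_trans (form_norm_mono om Hj) Hfin.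
have HBj0 := form_norm_pos Hf Hnz HBj.2.
have HBjB : fine (form_norm (Some j) om) <= fine (form_norm r om).
  by apply: fine_le; [exact: fine_gt0_fin | exact: fine_gt0_fin | exact: form_norm_mono].
have HcM : (chain_norm (Some j) D <= map_norm k r f)%E.
  apply: (@le_trans _ _ (map_normj k j f)).
    apply: ereal_sup_ubound; exists (p, U, w) => /=.
      by split => //; rewrite Hd oner_neq0.
    by rewrite Hd invr1 mule1.
  by apply: ereal_sup_ubound; exists j.
have Hb := bound_abs D HBj Hnz.
have Hle := le_trans Hb HcM.
have Mfin : map_norm k r f \is a fin_num.
  by rewrite ge0_fin_numE // (le_trans (chain_norm_ge0 _ _) HcM).
move: Hle; rewrite -(fineK Mfin) !lee_fin ler_pdivrMr // => Hle.
apply: (le_trans Hle); apply: ler_wpM2l => //.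
by rewrite -lee_fin fineK // (le_trans (chain_norm_ge0 _ _) HcM).
Qed.

Lemma pull_inB (R : realType) n m k r (f : 'rV[R]_n -> 'rV[R]_m) (om : kform R m k) :
  (map_norm k r f < +oo)%E -> inB r om -> inB r (pull f om).
Proof.
move=> HM HB; split; first exact: pull_form HB.1.
case: (pselect (form_nonzero om)) => Hnz.
  exact: le_lt_trans (pull_norm HM HB Hnz) (ltry _).
apply: (@le_lt_trans _ _ 0%:E); last exact: ltry.
apply: ge_ereal_sup => _ [j _ <-]; apply: ge_ereal_sup => _ [x _ <-].
by rewrite feval_pull feval_zero // normr0.
Qed.

Lemma feval_cvg (R : realType) n k r (om : kform R n k) P :
  inB r om -> chain_cauchy r P -> cvgn (fun i => feval om (P i)).
Proof.
move=> HB HP.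
case: (pselect (form_nonzero om)) => Hnz; last first.
  rewrite (_ : (fun i => _) = fun _ => 0); first exact: is_cvg_cst.
  by apply: funext => i; rewrite feval_zero.
have HBp := form_norm_pos HB.1 Hnz HB.2.
apply: cauchy_seq_cvg => e e0.
have [N HN] := HP (e / fine (form_norm r om)) (divr_gt0 e0 HBp).
exists N => i j Hi Hj.
have := bound_lt HB Hnz (HN i j Hi Hj).
by rewrite feval_sub divfK // gt_eqF.
Qed.

Unset Implicit Arguments.

Theorem mainTheorem11 (R : realType) (n m k : nat) (r : option nat)
    (f : 'rV[R]_n -> 'rV[R]_m) (om : kform R m k)
    (P : nat -> mchain R n k) (Q : nat -> mchain R m k) :
  smooth f ->
  (map_norm k r f < +oo)%E ->
  inB r om ->
  chain_cauchy r P ->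
  chain_cauchy r Q ->
  chain_equiv r Q (fun i => push f (P i)) ->
  [/\ inB r (pull f om),
      chain_cauchy r (fun i => push f (P i)),
      cvgn (fun i => feval (pull f om) (P i)),
      cvgn (fun i => feval om (Q i))
    & chainlet_int (pull f om) P = chainlet_int om Q].
Proof.
move=> _ HM HB HP HQ HE.
have HpB := pull_inB HM HB.
have Ca := feval_cvg HB HQ.
have Cb := feval_cvg HpB HP.
split => //.
- move=> e e0.
  set c := e / (`|fine (map_norm k r f)| + 1).
  have c0 : 0 < c by rewrite divr_gt0 // ltr_wpDl.
  have [N HN] := HP c c0.
  exists N => i j Hi Hj.
  rewrite -push_sub.
  have HD := HN i j Hi Hj.
  set D := chain_sub (P i) (P j) in HD *.
  apply: (@le_lt_trans _ _ (c * `|fine (map_norm k r f)|)%:E); last first.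
    rewrite lte_fin /c mulrAC ltr_pdivrMr ?ltr_wpDl // ltr_pM2l //.
    by rewrite ltrDl ltr01.
  apply: ge_ereal_sup => y [->|[om' [HB' Hnz'] <-]].
    by rewrite lee_fin mulr_ge0 // ltW.
  have HB'p := form_norm_pos HB'.1 Hnz' HB'.2.
  rewrite lee_fin -feval_pull ler_pdivrMr //.
  case: (pselect (form_nonzero (pull f om'))) => Hnzp; last first.
    by rewrite feval_zero // mulr_ge0 // ?mulr_ge0 // ltW.
  have HpB' := pull_inB HM HB'.
  have Hb := bound_lt HpB' Hnzp HD.
  have Hpn := pull_norm HM HB' Hnz'.
  have Hpos := form_norm_pos HpB'.1 Hnzp HpB'.2.
  move: Hpn; rewrite -(fineK (fine_gt0_fin Hpos)) lee_fin => Hpn.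
  apply: (le_trans (ler_norm _)); apply: (le_trans (ltW Hb)).
  rewrite -(mulrA c) ler_pM2l //.
  apply: (le_trans Hpn); rewrite ler_pM2r //.
  exact: ler_norm.
- case: (pselect (form_nonzero om)) => Hnz; last first.
    rewrite /chainlet_int.
    have Hnzp : ~ form_nonzero (pull f om).
      by move=> [p [w H]]; apply: Hnz; exists (f p), (fun i => ('d f p : _ -> _) (w i)).
    rewrite (_ : (fun i => feval (pull f om) (P i)) = fun _ => 0); last first.
      by apply: funext => i; rewrite feval_zero.
    rewrite (_ : (fun i => feval om (Q i)) = fun _ => 0) //.
    by apply: funext => i; rewrite feval_zero.
  have HBp := form_norm_pos HB.1 Hnz HB.2.
  rewrite /chainlet_int.
  have H1 : (fun i => feval om (Q i) - feval (pull f om) (P i)) @ \oo -->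
     (limn (fun i => feval om (Q i)) - limn (fun i => feval (pull f om) (P i))).
    exact: cvgB.
  have H2 : (fun i => feval om (Q i) - feval (pull f om) (P i)) @ \oo --> (0 : R).
    apply/cvgrPdist_lt => e e0.
    have [N HN] := HE (e / fine (form_norm r om)) (divr_gt0 e0 HBp).
    exists N => // i /= Hi.
    rewrite sub0r normrN feval_pull -feval_sub.
    by have := bound_lt HB Hnz (HN i Hi); rewrite divfK // gt_eqF.
  have E : limn (fun i => feval om (Q i)) - limn (fun i => feval (pull f om) (P i)) = 0.
    apply: (cvg_unique _ H1 H2); exact: norm_hausdorff.
  by apply/eqP; rewrite eq_sym -subr_eq0 E.
Qed.
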